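(* Consider a set of market participants (at least two) and a sequence of market data points $x = 1,2,3,\dots$. For each participant $i$ and data point $x$, let $D(i,x)\in\mathbb{R}$ be the real time at which $x$ is delivered to participant $i$, with $D(i,x) < D(i,x+1)$. Suppose an ordering system achieves response time fairness when trigger points are unknown, in the following sense: the ordering system receives the delivery times $D$ and the submission times $S(i,a)$ of all trades (but not their trigger points), and outputs a strict order $O$ on the trades; and for every finite collection of trades with any submission times and for every assignment of trigger points $TP(i,a)$ to these trades satisfying $D(i,TP(i,a)) \le S(i,a)$, the output order satisfies: whenever $TP(i,a) = TP(j,b) = x$ and $S(i,a) - D(i,x) < S(j,b) - D(j,x)$, then $O(i,a) < O(j,b)$. Then necessarily $$D(i,y) - D(i,x) = D(j,y) - D(j,x) \quad \text{for all participants } i,j \text{ and all data points } x,y.$$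
   Context: A trade $(i,a)$ denotes the $a$-th trade submitted by participant $i$; $S(i,a)$ is the real time at which it is submitted. The trigger point $TP(i,a)$ is the market data point in response to which the trade was generated, and the response time is $RT(i,a) = S(i,a) - D(i,TP(i,a))$. Response time fairness (for trades in the same speed race) requires: if $TP(i,a)=TP(j,b)$ and $RT(i,a) < RT(j,b)$ then $O(i,a) < O(j,b)$, where $O(i,a)<O(j,b)$ means trade $(i,a)$ is forwarded to the exchange's matching engine before $(j,b)$. ''Trigger points unknown'' means the ordering can depend only on the delivery times and submission times, so it must satisfy the fairness condition simultaneously for every possible assignment of trigger points consistent with these times. *)

(* Defs.v *)
From Stdlib Require Import Reals List.
Open Scope R_scope.

(* A trade (i,a): the a-th trade of participant i. *)
Definition trade (P : Type) : Type := (P * nat)%type.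

(* An ordering system (for fixed delivery times D, which it may use
   implicitly): given a finite collection of trades [T] and their
   submission times [S], it outputs a relation [O T S t u] meaning
   "t is forwarded before u". It does NOT receive trigger points. *)
Definition ordering_system (P : Type) : Type :=
  list (trade P) -> (P -> nat -> R) -> trade P -> trade P -> Prop.

Definition strict_order_on {P : Type} (T : list (trade P))
    (ord : trade P -> trade P -> Prop) : Prop :=
  (forall t, In t T -> ~ ord t t) /\
  (forall t u v, In t T -> In u T -> In v T -> ord t u -> ord u v -> ord t v).

Definition rt_fair_unknown_TP {P : Type} (D : P -> nat -> R)
    (O : ordering_system P) : Prop :=
  forall (T : list (trade P)) (S : P -> nat -> R),
    NoDup T ->
    strict_order_on T (O T S) /\
    forall TP : P -> nat -> nat,
      (forall i a, In (i, a) T -> D i (TP i a) <= S i a) ->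
      forall i a j b x,
        In (i, a) T -> In (j, b) T ->
        TP i a = x -> TP j b = x ->
        S i a - D i x < S j b - D j x ->
        O T S (i, a) (j, b).

(* Main.v *)
Require Import Defs.
From Stdlib Require Import Reals List Lra ClassicalEpsilon.
Open Scope R_scope.

Lemma core (P : Type) (D : P -> nat -> R) (O : ordering_system P) :
  rt_fair_unknown_TP D O ->
  forall i j x y, i <> j -> D i y - D j y < D i x - D j x -> False.
Proof.
  intros H i j x y Hij Hlt.
  set (c := (D i y - D j y + (D i x - D j x)) / 2).
  set (M := Rmax (Rmax (D j x) (D j y)) (Rmax (D i x - c) (D i y - c))).
  set (Sf := fun (k : P) (_ : nat) =>
         if excluded_middle_informative (k = i) then M + c else M).
  set (T := (i, 0%nat) :: (j, 0%nat) :: nil).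
  assert (ND : NoDup T).
  { constructor. simpl. intros [E|[]]. injection E; intros; congruence.
    constructor. simpl; tauto. constructor. }
  destruct (H T Sf ND) as [[Hirr Htr] Hf].
  assert (Si : Sf i 0%nat = M + c).
  { unfold Sf. destruct (excluded_middle_informative (i = i)); congruence. }
  assert (Sj : Sf j 0%nat = M).
  { unfold Sf. destruct (excluded_middle_informative (j = i)); congruence. }
  assert (M1 : D j x <= M /\ D j y <= M /\ D i x - c <= M /\ D i y - c <= M).
  { unfold M. repeat split.
    - eapply Rle_trans; [apply Rmax_l|]. eapply Rle_trans; [apply Rmax_l|apply Rle_refl].
    - eapply Rle_trans; [apply Rmax_r|]. eapply Rle_trans; [apply Rmax_l|apply Rle_refl].
    - eapply Rle_trans; [apply Rmax_l|]. apply Rmax_r.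
    - eapply Rle_trans; [apply Rmax_r|]. apply Rmax_r. }
  assert (InI : In (i, 0%nat) T) by (simpl; tauto).
  assert (InJ : In (j, 0%nat) T) by (simpl; tauto).
  assert (Hadm : forall z, (z = x \/ z = y) ->
            forall k a, In (k, a) T -> D k ((fun _ _ => z) k a) <= Sf k a).
  { intros z Hz k a Hin. simpl in Hin.
    destruct Hin as [E|[E|[]]]; injection E; intros; subst;
      [rewrite Si | rewrite Sj]; destruct Hz; subst; lra. }
  assert (O1 : O T Sf (i, 0%nat) (j, 0%nat)).
  { eapply (Hf (fun _ _ => x) (Hadm x (or_introl eq_refl)) i 0%nat j 0%nat x);
      auto. rewrite Si, Sj. unfold c in *. lra. }
  assert (O2 : O T Sf (j, 0%nat) (i, 0%nat)).
  { eapply (Hf (fun _ _ => y) (Hadm y (or_intror eq_refl)) j 0%nat i 0%nat y);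
      auto. rewrite Si, Sj. unfold c in *. lra. }
  exact (Hirr _ InI (Htr _ _ _ InI InJ InI O1 O2)).
Qed.

Theorem lemma1 (P : Type) (D : P -> nat -> R) (O : ordering_system P) :
  (exists i j : P, i <> j) ->
  (forall i x, D i x < D i (S x)) ->
  rt_fair_unknown_TP D O ->
  forall i j x y, D i y - D i x = D j y - D j x.
Proof.
  intros _ _ H i j x y.
  destruct (excluded_middle_informative (i = j)) as [E|Hij].
  { subst; reflexivity. }
  destruct (Rtotal_order (D i y - D j y) (D i x - D j x)) as [L|[E|L]].
  - exfalso; exact (core P D O H i j x y Hij L).
  - lra.
  - exfalso; exact (core P D O H i j y x Hij L).
Qed.
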